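(* If $\mathbf{C}$ is a propositional Hilbert-type calculus whose set of theorems $\mathrm{Thm}(\mathbf{C})$ is undecidable, then $\mathbf{C}$ is not effectively approximable.
   Context: A propositional language has variables $X_1,X_2,\ldots$ and finitely many connectives with arities. A substitution $\sigma$ maps variables to formulas; $F\sigma$ denotes simultaneous replacement. A propositional Hilbert-type calculus $\mathbf{C}$ is given by a finite set of axioms and a finite set of rules (premises $A_1,\ldots,A_n$, conclusion $C$). A derivation is a finite sequence of formulas each of which is a substitution instance of an axiom or is $C\sigma$ for some rule and substitution $\sigma$ with all $A_j\sigma$ occurring earlier; $\mathrm{Thm}(\mathbf{C})$ is the set of derivable formulas. A finite-valued logic $\mathbf{M}$ is given by a finite set $V(\mathbf{M})$ of truth values, designated values $V^+(\mathbf{M})$, and a truth function for each connective; valuations map variables to truth values and extend to formulas; a valuation satisfies $F$ if $F$ is designated; a tautology is a formula satisfied by every valuation; $\mathrm{Taut}(\mathbf{M})$ is the set of tautologies; $\mathbf{M}_1\unlhd\mathbf{M}_2$ means $\mathrm{Taut}(\mathbf{M}_1)\subseteq\mathrm{Taut}(\mathbf{M}_2)$. $\mathbf{M}$ is a cover for $\mathbf{C}$ if all axioms of $\mathbf{C}$ are tautologies of $\mathbf{M}$ and for every rule every valuation satisfying all premises satisfies the conclusion. $\mathbf{C}$ is effectively approximable if there is an effectively enumerated sequence $\langle\mathbf{M}_1,\mathbf{M}_2,\ldots\rangle$ of covers of $\mathbf{C}$ such that $\mathbf{M}_i\unlhd\mathbf{M}_j$ whenever $i\ge j$ and $\mathrm{Thm}(\mathbf{C})=\bigcap_j\mathrm{Taut}(\mathbf{M}_j)$.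 *)

(* Defs.v *)
From Stdlib Require Import List Arith.
Import ListNotations.

Inductive recfun : Type :=
| RZero : recfun
| RSucc : recfun
| RProj : nat -> recfun
| RComp : recfun -> list recfun -> recfun
| RPrec : recfun -> recfun -> recfun
| RMu   : recfun -> recfun.

Inductive reval : recfun -> list nat -> nat -> Prop :=
| ev_zero v : reval RZero v 0
| ev_succ x v : reval RSucc (x :: v) (S x)
| ev_proj i v : reval (RProj i) v (nth i v 0)
| ev_comp f gs v ys y :
    revals gs v ys -> reval f ys y -> reval (RComp f gs) v y
| ev_prec0 f g v y : reval f v y -> reval (RPrec f g) (0 :: v) y
| ev_precS f g x v z y :
    reval (RPrec f g) (x :: v) z -> reval g (x :: z :: v) y ->
    reval (RPrec f g) (S x :: v) y
| ev_mu f v n :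
    reval f (n :: v) 0 ->
    (forall m, m < n -> exists k, reval f (m :: v) (S k)) ->
    reval (RMu f) v n
with revals : list recfun -> list nat -> list nat -> Prop :=
| evs_nil v : revals [] v []
| evs_cons g gs v y ys :
    reval g v y -> revals gs v ys -> revals (g :: gs) v (y :: ys).

Definition npair (x y : nat) : nat := (x + y) * (x + y + 1) / 2 + y.

Fixpoint code_list (l : list nat) : nat :=
  match l with
  | [] => 0
  | x :: l' => S (npair x (code_list l'))
  end.

(* A language is given by the list of arities of its (finitely many)
   connectives: connective [c] (for [c < length ar]) has arity [nth c ar 0].
   Variable [Var n] stands for X_{n+1}. *)
Definition language := list nat.

Inductive form : Type :=
| Var : nat -> form
| App : nat -> list form -> form.

Fixpoint wf (ar : language) (F : form) : Prop :=
  match F with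
  | Var _ => True
  | App c args =>
      c < length ar /\ length args = nth c ar 0 /\
      (fix wfs (l : list form) : Prop :=
         match l with [] => True | G :: l' => wf ar G /\ wfs l' end) args
  end.

Fixpoint code_form (F : form) : nat :=
  match F with
  | Var n => npair 0 n
  | App c args => npair (S c) (code_list (map code_form args))
  end.

Fixpoint subst (s : nat -> form) (F : form) : form :=
  match F with
  | Var n => s n
  | App c args => App c (map (subst s) args)
  end.

Definition wf_subst (ar : language) (s : nat -> form) : Prop :=
  forall n, wf ar (s n).

Record calculus := Calculus {
  axioms : list form;
  rules  : list (list form * form)  (* (premises, conclusion) *)
}.

Definition wf_calculus (ar : language) (C : calculus) : Prop :=
  (forall A, In A (axioms C) -> wf ar A) /\
  (forall r, In r (rules C) -> (forall A, In A (fst r) -> wf ar A) /\ wf ar (snd r)).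

Definition deriv_step (ar : language) (C : calculus) (prev : list form) (G : form) : Prop :=
  (exists A s, In A (axioms C) /\ wf_subst ar s /\ G = subst s A) \/
  (exists r s, In r (rules C) /\ wf_subst ar s /\ G = subst s (snd r) /\
               forall A, In A (fst r) -> In (subst s A) prev).

Definition derivation (ar : language) (C : calculus) (d : list form) : Prop :=
  forall i, i < length d -> deriv_step ar C (firstn i d) (nth i d (Var 0)).

Definition Thm (ar : language) (C : calculus) (F : form) : Prop :=
  exists d, derivation ar C d /\ In F d.

(* Truth values are 0, ..., nval-1; [desig v] tells whether v is designated;
   [tfun c args] is the truth function of connective c. *)
Record fvlogic := FVLogic {
  nval  : nat;
  desig : nat -> bool;
  tfun  : nat -> list nat -> nat
}.

Definition is_fvlogic (ar : language) (M : fvlogic) : Prop :=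
  forall c args, c < length ar -> length args = nth c ar 0 ->
    (forall v, In v args -> v < nval M) -> tfun M c args < nval M.

Definition valuation (M : fvlogic) (e : nat -> nat) : Prop :=
  forall n, e n < nval M.

Fixpoint value (M : fvlogic) (e : nat -> nat) (F : form) : nat :=
  match F with
  | Var n => e n
  | App c args => tfun M c (map (value M e) args)
  end.

Definition satisfies (M : fvlogic) (e : nat -> nat) (F : form) : Prop :=
  desig M (value M e F) = true.

Definition Taut (ar : language) (M : fvlogic) (F : form) : Prop :=
  wf ar F /\ forall e, valuation M e -> satisfies M e F.

Definition taut_le (ar : language) (M1 M2 : fvlogic) : Prop :=
  forall F, Taut ar M1 F -> Taut ar M2 F.

Definition cover (ar : language) (C : calculus) (M : fvlogic) : Prop :=
  (forall A, In A (axioms C) -> Taut ar M A) /\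
  (forall r, In r (rules C) -> forall e, valuation M e ->
     (forall A, In A (fst r) -> satisfies M e A) -> satisfies M e (snd r)).

Definition effectively_enumerated (ar : language) (M : nat -> fvlogic) : Prop :=
  exists pN pD pT : recfun,
    (forall i, reval pN [i] (nval (M i))) /\
    (forall i v, v < nval (M i) -> reval pD [i; v] (if desig (M i) v then 1 else 0)) /\
    (forall i c args, c < length ar -> length args = nth c ar 0 ->
        (forall v, In v args -> v < nval (M i)) ->
        reval pT [i; c; code_list args] (tfun (M i) c args)).

Definition effectively_approximable (ar : language) (C : calculus) : Prop :=
  exists M : nat -> fvlogic,
    (forall i, is_fvlogic ar (M i)) /\
    effectively_enumerated ar M /\
    (forall i, cover ar C (M i)) /\
    (forall i j, j <= i -> taut_le ar (M i) (M j)) /\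
    (forall F, wf ar F -> (Thm ar C F <-> forall j, Taut ar (M j) F)).

Definition decidable_set (ar : language) (S : form -> Prop) : Prop :=
  exists p : recfun, forall F, wf ar F ->
    exists b : bool, reval p [code_form F] (if b then 1 else 0) /\ (b = true <-> S F).

(* Main.v *)
Require Import Defs.
From Stdlib Require Import List Arith Lia PeanoNat IndefiniteDescription Classical.
Import ListNotations.

Lemma ev_proj' i v y : nth i v 0 = y -> reval (RProj i) v y.
Proof. intros <-. constructor. Qed.

Fixpoint tri s := match s with 0 => 0 | S s' => S s' + tri s' end.
Lemma tri2 s : tri s * 2 = s * (s+1).
Proof. induction s; simpl tri; nia. Qed.
Lemma npair_tri x y : npair x y = tri (x+y) + y.
Proof. unfold npair. rewrite <- tri2, Nat.div_mul; lia. Qed.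
Lemma tri_mono a b : a <= b -> tri a <= tri b.
Proof. induction 1; simpl; lia. Qed.

Definition nxt (p : nat * nat) := match p with (0, y) => (S y, 0) | (S x, y) => (x, S y) end.
Fixpoint unp z := match z with 0 => (0,0) | S z' => nxt (unp z') end.
Definition fst_ z := fst (unp z).
Definition snd_ z := snd (unp z).

Lemma npair_nxt p : npair (fst (nxt p)) (snd (nxt p)) = S (npair (fst p) (snd p)).
Proof. destruct p as [[|x] y]; simpl; rewrite !npair_tri; simpl.
 - rewrite !Nat.add_0_r. lia.
 - replace (x + S y) with (S (x + y)) by lia. simpl tri. lia.
Qed.
Lemma npair_unp z : npair (fst_ z) (snd_ z) = z.
Proof. unfold fst_, snd_. induction z; simpl. reflexivity. rewrite npair_nxt, IHz. reflexivity. Qed.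

Lemma unp_npair x y : unp (npair x y) = (x,y).
Proof.
  remember (npair x y) as n eqn:E. revert x y E.
  induction n; intros x y E.
  - rewrite npair_tri in E. destruct x, y; simpl in *; try lia. reflexivity.
  - simpl. destruct y as [|y].
    + destruct x as [|x]. rewrite npair_tri in E; simpl in E; lia.
      rewrite (IHn 0 x). reflexivity. rewrite !npair_tri in *. simpl in *.
      rewrite !Nat.add_0_r in *. lia.
    + rewrite (IHn (S x) y). reflexivity. rewrite !npair_tri in *.
      replace (x + S y) with (S x + y) in E by lia. lia.
Qed.
Lemma fst_npair x y : fst_ (npair x y) = x.
Proof. unfold fst_; rewrite unp_npair; reflexivity. Qed.
Lemma snd_npair x y : snd_ (npair x y) = y.
Proof. unfold snd_; rewrite unp_npair; reflexivity. Qed.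
Lemma npair_inj x y x' y' : npair x y = npair x' y' -> x = x' /\ y = y'.
Proof. intros H. pose proof (fst_npair x y). pose proof (snd_npair x y).
  rewrite H, fst_npair, snd_npair in *. split; congruence. Qed.
Lemma npair_ge x y : x <= npair x y /\ y <= npair x y.
Proof. rewrite npair_tri. pose proof (tri_mono x (x+y)). assert (x <= tri x) by (induction x; simpl; lia). lia. Qed.

Definition padd := RPrec (RProj 0) (RComp RSucc [RProj 1]).
Lemma padd_ok a b : reval padd [a;b] (a+b).
Proof. induction a; simpl.
 - constructor. apply ev_proj'. reflexivity.
 - econstructor. exact IHa. eapply ev_comp. econstructor. apply ev_proj'. reflexivity. constructor. constructor.
Qed.
Definition ppred := RPrec RZero (RProj 0).
Lemma ppred_ok a : reval ppred [a] (pred a).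
Proof. induction a; simpl. constructor. constructor. econstructor. exact IHa. apply ev_proj'. reflexivity. Qed.
Definition psub' := RPrec (RProj 0) (RComp ppred [RProj 1]).
Lemma psub'_ok b a : reval psub' [b;a] (a - b).
Proof. induction b; simpl.
 - constructor. apply ev_proj'. simpl; lia.
 - econstructor. exact IHb. eapply ev_comp. econstructor. apply ev_proj'. reflexivity. constructor.
   replace (a - S b) with (pred (a - b)) by lia. apply ppred_ok.
Qed.
Definition psub := RComp psub' [RProj 1; RProj 0].
Lemma psub_ok a b : reval psub [a;b] (a - b).
Proof. eapply ev_comp. econstructor. apply ev_proj'; reflexivity. econstructor. apply ev_proj'; reflexivity. constructor. apply psub'_ok. Qed.
Lemma psub_ok' a b y : y = a - b -> reval psub [a;b] y.
Proof. intros ->. apply psub_ok. Qed.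
Definition pT := RPrec RZero (RComp padd [RComp RSucc [RProj 0]; RProj 1]).
Lemma pT_ok s : reval pT [s] (tri s).
Proof. induction s; simpl. constructor. constructor.
 econstructor. exact IHs. eapply ev_comp. econstructor. eapply ev_comp. econstructor. apply ev_proj'; reflexivity. constructor. constructor.
 econstructor. apply ev_proj'; reflexivity. constructor. apply padd_ok. Qed.
Definition pnpair := RComp padd [RComp pT [padd]; RProj 1].
Lemma pnpair_ok a b : reval pnpair [a;b] (npair a b).
Proof. rewrite npair_tri. eapply ev_comp. econstructor. eapply ev_comp. econstructor. apply padd_ok. constructor. apply pT_ok.
 econstructor. apply ev_proj'; reflexivity. constructor. apply padd_ok. Qed.
Definition pdiag := RMu (RComp psub [RComp RSucc [RProj 1]; RComp pT [RComp RSucc [RProj 0]]]).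
Lemma pdiag_f s z : reval (RComp psub [RComp RSucc [RProj 1]; RComp pT [RComp RSucc [RProj 0]]]) [s;z] (S z - tri (S s)).
Proof. eapply ev_comp. econstructor. eapply ev_comp. econstructor. apply ev_proj'; reflexivity. constructor. constructor.
  econstructor. eapply ev_comp. econstructor. eapply ev_comp. econstructor. apply ev_proj'; reflexivity. constructor. constructor. constructor.
  apply pT_ok. constructor. apply psub_ok. Qed.
Lemma pdiag_ok z : reval pdiag [z] (fst_ z + snd_ z).
Proof.
  pose proof (npair_unp z) as E. rewrite npair_tri in E.
  constructor.
  - assert (H: S z - tri (S (fst_ z + snd_ z)) = 0) by (simpl tri; lia).
    pose proof (pdiag_f (fst_ z + snd_ z) z) as P. rewrite H in P. exact P.
  - intros m Hm. exists (S z - tri (S m) - 1).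
    assert (H: S (S z - tri (S m) - 1) = S z - tri (S m)) by (pose proof (tri_mono (S m) (fst_ z + snd_ z)); lia).
    rewrite H. apply pdiag_f.
Qed.
Definition psnd := RComp psub [RProj 0; RComp pT [pdiag]].
Lemma psnd_ok z : reval psnd [z] (snd_ z).
Proof. pose proof (npair_unp z) as E. rewrite npair_tri in E.
  eapply ev_comp. econstructor. apply ev_proj'; reflexivity. econstructor. eapply ev_comp. econstructor. apply pdiag_ok. constructor. apply pT_ok. constructor. apply psub_ok'. simpl. lia. Qed.
Definition pfst := RComp psub [pdiag; psnd].
Lemma pfst_ok z : reval pfst [z] (fst_ z).
Proof. eapply ev_comp. econstructor. apply pdiag_ok. econstructor. apply psnd_ok. constructor. apply psub_ok'. lia. Qed.

#[export] Hint Rewrite fst_npair snd_npair : np.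
Definition rec (f : nat -> nat) := exists p, forall x, reval p [x] (f x).
Definition rec2 (op : nat -> nat -> nat) := rec (fun x => op (fst_ x) (snd_ x)).
Definition rec3 (op : nat -> nat -> nat -> nat) := rec (fun x => op (fst_ x) (fst_ (snd_ x)) (snd_ (snd_ x))).

Lemma rec_ext f g : (forall x, f x = g x) -> rec g -> rec f.
Proof. intros E [p Hp]. exists p. intros x. rewrite E. apply Hp. Qed.
Lemma rec_id : rec (fun x => x).
Proof. exists (RProj 0). intros x. apply ev_proj'. reflexivity. Qed.
Lemma rec_const c : rec (fun _ => c).
Proof. induction c as [|c [p Hp]].
 - exists RZero. intros. constructor.
 - exists (RComp RSucc [p]). intros x. eapply ev_comp. econstructor. apply Hp. constructor. constructor. Qed.
Lemma rec_fst : rec fst_.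
Proof. exists pfst. apply pfst_ok. Qed.
Lemma rec_snd : rec snd_.
Proof. exists psnd. apply psnd_ok. Qed.
Lemma rec_S : rec S.
Proof. exists (RComp RSucc [RProj 0]). intros x. eapply ev_comp. econstructor. apply ev_proj'; reflexivity. constructor. constructor. Qed.
Lemma rec_pred : rec pred.
Proof. exists ppred. apply ppred_ok. Qed.
Lemma rec_comp f g : rec f -> rec g -> rec (fun x => f (g x)).
Proof. intros [p Hp] [q Hq]. exists (RComp p [q]). intros x. eapply ev_comp. econstructor. apply Hq. constructor. apply Hp. Qed.
Lemma rec_npair f g : rec f -> rec g -> rec (fun x => npair (f x) (g x)).
Proof. intros [p Hp] [q Hq]. exists (RComp pnpair [p;q]). intros x. eapply ev_comp. econstructor. apply Hp. econstructor. apply Hq. constructor. apply pnpair_ok. Qed.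
Lemma rec_iter step : rec step -> rec (fun x => Nat.iter (fst_ x) step (snd_ x)).
Proof. intros [p Hp].
  assert (H: forall n m, reval (RPrec (RProj 0) (RComp p [RProj 1])) [n; m] (Nat.iter n step m)).
  { induction n; intros m; simpl. constructor. apply ev_proj'; reflexivity.
    econstructor. apply IHn. eapply ev_comp. econstructor. apply ev_proj'; reflexivity. constructor. apply Hp. }
  exists (RComp (RPrec (RProj 0) (RComp p [RProj 1])) [pfst; psnd]). intros x.
  eapply ev_comp. econstructor. apply pfst_ok. econstructor. apply psnd_ok. constructor. apply H. Qed.
Lemma rec_op2 op f g : rec2 op -> rec f -> rec g -> rec (fun x => op (f x) (g x)).
Proof. intros H Hf Hg. eapply rec_ext. 2: apply (rec_comp _ _ H (rec_npair _ _ Hf Hg)).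
  intros x. simpl. rewrite fst_npair, snd_npair. reflexivity. Qed.
Lemma rec_op3 op f g h : rec3 op -> rec f -> rec g -> rec h -> rec (fun x => op (f x) (g x) (h x)).
Proof. intros H Hf Hg Hh. eapply rec_ext. 2: apply (rec_comp _ _ H (rec_npair _ _ Hf (rec_npair _ _ Hg Hh))).
  intros x. simpl. rewrite !snd_npair, !fst_npair. reflexivity. Qed.

Lemma iter_S a b : Nat.iter a S b = a + b.
Proof. induction a; simpl; auto. Qed.
Lemma iter_pred a b : Nat.iter b pred a = a - b.
Proof. induction b; simpl. lia. rewrite IHb. lia. Qed.

Lemma rec2_add : rec2 Nat.add.
Proof. eapply rec_ext. 2: apply (rec_iter S rec_S). intros x. simpl. rewrite iter_S. reflexivity. Qed.
Lemma rec2_sub : rec2 Nat.sub.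
Proof. eapply rec_ext. 2: apply (rec_comp _ _ (rec_iter pred rec_pred) (rec_npair _ _ rec_snd rec_fst)).
  intros x. simpl. rewrite fst_npair, snd_npair, iter_pred. reflexivity. Qed.

Create HintDb recdb.
#[export] Hint Resolve rec_fst rec_snd rec_S rec_pred rec2_add rec2_sub : recdb.

Ltac rhook := fail.
Ltac rtac :=
  match goal with
  | |- rec (fun x => x) => exact rec_id
  | |- rec (fun _ => ?c) => exact (rec_const c)
  | |- rec (fun x => npair (@?f x) (@?g x)) => apply (rec_npair f g); rtac
  | |- rec (fun x => ?op (@?f x) (@?g x) (@?h x)) => apply (rec_op3 op f g h); [solve [eauto with recdb] | rtac | rtac | rtac]
  | |- rec (fun x => ?op (@?f x) (@?g x)) => apply (rec_op2 op f g); [solve [eauto with recdb | rhook] | rtac | rtac]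
  | |- rec (fun x => ?F (@?g x)) => apply (rec_comp F g); [solve [eauto with recdb] | rtac]
  | |- rec ?F => solve [eauto with recdb]
  end.

Definition mulstep s := npair (fst_ s + snd_ s) (snd_ s).
Lemma rec_mulstep : rec mulstep.
Proof. unfold mulstep. rtac. Qed.
#[export] Hint Resolve rec_mulstep : recdb.
Definition itr (step : nat -> nat) y := Nat.iter (fst_ y) step (snd_ y).
Lemma rec_itr step : rec step -> rec (itr step).
Proof. intros H. apply (rec_iter step H). Qed.
#[export] Hint Resolve rec_itr : recdb.
Lemma iter_mul a b c : Nat.iter a mulstep (npair c b) = npair (c + a*b) b.
Proof. induction a; simpl. rewrite Nat.add_0_r. reflexivity. rewrite IHa. unfold mulstep.
  rewrite fst_npair, snd_npair. f_equal. lia. Qed.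
Lemma rec2_mul : rec2 Nat.mul.
Proof. eapply rec_ext with (g := fun x => fst_ (itr mulstep (npair (fst_ x) (npair 0 (snd_ x))))).
  intros x. unfold itr. rewrite fst_npair, snd_npair, iter_mul, fst_npair. reflexivity.
  rtac. Qed.
#[export] Hint Resolve rec2_mul : recdb.

Definition ite (c a b : nat) := match c with 0 => b | S _ => a end.
Definition eqn a b := if a =? b then 1 else 0.
Definition ltn a b := if a <? b then 1 else 0.
Lemma rec3_ite : rec3 ite.
Proof. eapply rec_ext with (g := fun x => (1 - (1 - fst_ x)) * fst_ (snd_ x) + (1 - fst_ x) * snd_ (snd_ x)).
  intros x. unfold ite. destruct (fst_ x); simpl; lia. rtac. Qed.
Lemma rec2_eqn : rec2 eqn.
Proof. eapply rec_ext with (g := fun x => 1 - ((fst_ x - snd_ x) + (snd_ x - fst_ x))).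
  intros x. unfold eqn. destruct (Nat.eqb_spec (fst_ x) (snd_ x)); lia. rtac. Qed.
Lemma rec2_ltn : rec2 ltn.
Proof. eapply rec_ext with (g := fun x => 1 - (1 - (snd_ x - fst_ x))).
  intros x. unfold ltn. destruct (Nat.ltb_spec (fst_ x) (snd_ x)); lia. rtac. Qed.
#[export] Hint Resolve rec3_ite rec2_eqn rec2_ltn : recdb.

Definition lstep (f : nat -> nat) (s : nat) : nat :=
  ite (snd_ s) (npair (f (npair (fst_ s) (fst_ (pred (snd_ s))))) (snd_ (pred (snd_ s)))) s.
Definition lfold f a l := fst_ (Nat.iter l (lstep f) (npair a l)).
Lemma rec2_lfold f : rec f -> rec2 (lfold f).
Proof. intros Hf. unfold rec2, lfold.
  eapply rec_ext with (g := fun x => fst_ (itr (lstep f) (npair (snd_ x) (npair (fst_ x) (snd_ x))))).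
  intros x. unfold itr. rewrite fst_npair, snd_npair. reflexivity.
  assert (rec (lstep f)) by (unfold lstep; rtac). rtac. Qed.

Lemma lfold_spec f L a : lfold f a (code_list L) = fold_left (fun acc e => f (npair acc e)) L a.
Proof.
  unfold lfold.
  enough (H: forall L a k, code_list L <= k -> Nat.iter k (lstep f) (npair a (code_list L)) = npair (fold_left (fun acc e => f (npair acc e)) L a) 0).
  { rewrite H; auto. apply fst_npair. }
  clear. induction L as [|x L IH]; intros a k Hk; simpl.
  - clear Hk. induction k; simpl. reflexivity. rewrite IHk. unfold lstep. rewrite snd_npair. reflexivity.
  - simpl in Hk. destruct k as [|k]. lia. rewrite Nat.iter_succ_r.
    unfold lstep at 2. rewrite snd_npair. simpl. rewrite !fst_npair, !snd_npair.
    apply IH. pose proof (npair_ge x (code_list L)). lia.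
Qed.
Ltac rhook ::= first [ apply rec2_lfold ]; rtac.

Definition tst n := ite n 1 0.
Lemma rec_tst : rec tst. Proof. unfold tst. rtac. Qed.
#[export] Hint Resolve rec_tst : recdb.

Definition lall (p : nat -> nat) prm l :=
  snd_ (lfold (fun s => npair (fst_ (fst_ s)) (snd_ (fst_ s) * tst (p (npair (fst_ (fst_ s)) (snd_ s))))) (npair prm 1) l).
Lemma rec2_lall p : rec p -> rec2 (lall p).
Proof. intros H. unfold rec2, lall. rtac. Qed.
Ltac rhook ::= first [ apply rec2_lfold | apply rec2_lall ]; rtac.

Lemma lall_spec p prm L : lall p prm (code_list L) <> 0 <-> Forall (fun e => p (npair prm e) <> 0) L.
Proof. unfold lall. rewrite lfold_spec.
  enough (H: forall b, exists b', fold_left (fun acc e => npair (fst_ (fst_ (npair acc e))) (snd_ (fst_ (npair acc e)) * tst (p (npair (fst_ (fst_ (npair acc e))) (snd_ (npair acc e)))))) L (npair prm b) = npair prm b' /\ (b' <> 0 <-> b <> 0 /\ Forall (fun e => p (npair prm e) <> 0) L)).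
  { destruct (H 1) as [b' [-> E]]. rewrite snd_npair, E. split; [tauto | intros; split; [lia | auto]]. }
  induction L as [|x L IH]; intros b; simpl.
  - exists b. split; auto. split; intros; [split; auto|tauto].
  - rewrite !fst_npair, !snd_npair. destruct (IH (b * tst (p (npair prm x)))) as [b' [E1 E2]].
    exists b'. rewrite E1. split; auto. rewrite E2. rewrite Forall_cons_iff.
    unfold tst, ite. destruct (p (npair prm x)); split; intros; try lia; intuition lia.
Qed.

Definition lex (p : nat -> nat) prm l := 1 - lall (fun y => 1 - tst (p y)) prm l.
Lemma rec2_lex p : rec p -> rec2 (lex p).
Proof. intros H. unfold rec2, lex. rtac. Qed.
Ltac rhook ::= first [ apply rec2_lfold | apply rec2_lall | apply rec2_lex ]; rtac.
Lemma Exists_dec_nat (q : nat -> nat) L : Exists (fun e => q e <> 0) L \/ Forall (fun e => q e = 0) L.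
Proof. induction L as [|x L [IH|IH]]. right; auto. left; auto.
  destruct (Nat.eq_dec (q x) 0). right; auto. left; auto. Qed.
Lemma FE_incomp (q : nat -> nat) L : Exists (fun e => q e <> 0) L -> Forall (fun e => q e = 0) L -> False.
Proof. intros HE HF. rewrite Exists_exists in HE. rewrite Forall_forall in HF. destruct HE as [x [? ?]]. eauto. Qed.
Lemma lex_spec p prm L : lex p prm (code_list L) <> 0 <-> Exists (fun e => p (npair prm e) <> 0) L.
Proof. unfold lex. pose proof (lall_spec (fun y => 1 - tst (p y)) prm L) as H.
  assert (E: Forall (fun e => 1 - tst (p (npair prm e)) <> 0) L <-> Forall (fun e => p (npair prm e) = 0) L).
  { split; intros HF; eapply Forall_impl; try apply HF; intros e; simpl; unfold tst, ite;
     destruct (p (npair prm e)); lia. }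
  rewrite E in H. pose proof (FE_incomp (fun e => p (npair prm e)) L).
  destruct (Exists_dec_nat (fun e => p (npair prm e)) L) as [HE|HF].
  - split; auto. intros _ C. apply (FE_incomp _ L HE). apply H. lia.
  - split; intros C. apply H in HF. lia. exfalso. exact (FE_incomp _ L C HF).
Qed.

Definition lmem l e := lex (fun y => eqn (fst_ y) (snd_ y)) e l.
Lemma rec2_lmem : rec2 lmem. Proof. unfold rec2, lmem. rtac. Qed.
#[export] Hint Resolve rec2_lmem : recdb.
Lemma lmem_spec L e : lmem (code_list L) e <> 0 <-> In e L.
Proof. unfold lmem. rewrite lex_spec, Exists_exists. split.
  - intros [x [H1 H2]]. rewrite fst_npair, snd_npair in H2. unfold eqn in H2.
    destruct (Nat.eqb_spec e x); subst; auto; lia.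
  - intros H. exists e. split; auto. rewrite fst_npair, snd_npair. unfold eqn. rewrite Nat.eqb_refl. lia.
Qed.

Definition llen l := lfold (fun s => S (fst_ s)) 0 l.
Lemma rec_llen : rec llen. Proof. unfold llen. rtac. Qed.
#[export] Hint Resolve rec_llen : recdb.
Lemma llen_spec L : llen (code_list L) = length L.
Proof. unfold llen. rewrite lfold_spec.
  enough (forall a, fold_left (fun acc e => S (fst_ (npair acc e))) L a = a + length L) by auto.
  induction L; intros a0; simpl. lia. rewrite fst_npair, IHL. lia. Qed.

Definition lnth l i := snd_ (lfold (fun s => ite (eqn (fst_ (fst_ s)) 1) (npair 0 (snd_ s)) (npair (pred (fst_ (fst_ s))) (snd_ (fst_ s)))) (npair (S i) 0) l).
Lemma rec2_lnth : rec2 lnth. Proof. unfold rec2, lnth. rtac. Qed.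
#[export] Hint Resolve rec2_lnth : recdb.
Lemma lnth_spec L i : lnth (code_list L) i = nth i L 0.
Proof. unfold lnth. rewrite lfold_spec.
  enough (forall L k r, snd_ (fold_left (fun acc e => ite (eqn (fst_ (fst_ (npair acc e))) 1) (npair 0 (snd_ (npair acc e))) (npair (pred (fst_ (fst_ (npair acc e)))) (snd_ (fst_ (npair acc e))))) L (npair k r)) = match k with 0 => r | S i => nth i L r end) by (rewrite H; destruct L; simpl; auto; destruct i; auto).
  clear. induction L as [|x L IH]; intros k r; simpl.
  - rewrite snd_npair. destruct k as [|[|k]]; auto.
  - rewrite !fst_npair, !snd_npair. destruct k as [|[|k]]; simpl.
    + rewrite (IH 0). auto.
    + rewrite (IH 0). auto.
    + rewrite IH. auto.
Qed.

Definition lrev l := lfold (fun s => S (npair (snd_ s) (fst_ s))) 0 l.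
Lemma rec_lrev : rec lrev. Proof. unfold lrev. rtac. Qed.
#[export] Hint Resolve rec_lrev : recdb.
Lemma lrev_spec L : lrev (code_list L) = code_list (rev L).
Proof. unfold lrev. rewrite lfold_spec.
  enough (forall A, fold_left (fun acc e => S (npair (snd_ (npair acc e)) (fst_ (npair acc e)))) L (code_list A) = code_list (rev L ++ A)) by (pose proof (H []) as H0; simpl in H0; rewrite app_nil_r in H0; exact H0).
  induction L as [|x L IH]; intros A; simpl. auto.
  rewrite fst_npair, snd_npair. rewrite <- app_assoc. simpl. rewrite <- IH. reflexivity. Qed.

Definition lmapr (p : nat -> nat) prm l := snd_ (lfold (fun s => npair (fst_ (fst_ s)) (S (npair (p (npair (fst_ (fst_ s)) (snd_ s))) (snd_ (fst_ s))))) (npair prm 0) l).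
Definition lmap p prm l := lrev (lmapr p prm l).
Lemma rec2_lmap p : rec p -> rec2 (lmap p).
Proof. intros H. unfold rec2, lmap, lmapr. rtac. Qed.
Ltac rhook ::= first [ apply rec2_lfold | apply rec2_lall | apply rec2_lex | apply rec2_lmap ]; rtac.
Lemma lmap_spec p prm L : lmap p prm (code_list L) = code_list (map (fun e => p (npair prm e)) L).
Proof. unfold lmap, lmapr. rewrite lfold_spec.
  enough (forall A, fold_left (fun acc e => npair (fst_ (fst_ (npair acc e))) (S (npair (p (npair (fst_ (fst_ (npair acc e))) (snd_ (npair acc e)))) (snd_ (fst_ (npair acc e)))))) L (npair prm (code_list A)) = npair prm (code_list (rev (map (fun e => p (npair prm e)) L) ++ A))).
  { pose proof (H []) as H0; simpl in H0. rewrite H0, snd_npair, app_nil_r, lrev_spec, rev_involutive. auto. }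
  induction L as [|x L IH]; intros A; simpl. auto.
  rewrite !fst_npair, !snd_npair. rewrite <- app_assoc. simpl. rewrite <- IH. reflexivity. Qed.

Fixpoint lookf a (L : list nat) : option nat :=
  match L with [] => None | e :: L' => if fst_ e =? a then Some (snd_ e) else lookf a L' end.
Definition look t a := snd_ (snd_ (lfold (fun s => ite (fst_ (snd_ (fst_ s))) (fst_ s)
   (ite (eqn (fst_ (snd_ s)) (fst_ (fst_ s))) (npair (fst_ (fst_ s)) (npair 1 (snd_ (snd_ s)))) (fst_ s))) (npair a (npair 0 0)) t)).
Lemma rec2_look : rec2 (fun t a => look t a). Proof. unfold rec2, look. rtac. Qed.
#[export] Hint Resolve rec2_look : recdb.
Lemma look_spec L a : look (code_list L) a = match lookf a L with None => 0 | Some v => v end.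
Proof. unfold look. rewrite lfold_spec.
  assert (H1: forall L v, fold_left (fun acc e => ite (fst_ (snd_ (fst_ (npair acc e)))) (fst_ (npair acc e))
   (ite (eqn (fst_ (snd_ (npair acc e))) (fst_ (fst_ (npair acc e)))) (npair (fst_ (fst_ (npair acc e))) (npair 1 (snd_ (snd_ (npair acc e))))) (fst_ (npair acc e)))) L (npair a (npair 1 v)) = npair a (npair 1 v)).
  { induction L0; intros v; simpl; auto. autorewrite with np. simpl. auto. }
  induction L as [|x L IH]; simpl. rewrite !snd_npair. auto.
  autorewrite with np. simpl. unfold eqn.
  destruct (fst_ x =? a); simpl. rewrite H1. autorewrite with np. auto. auto.
Qed.

Lemma code_list_surj n : exists L, code_list L = n.
Proof. induction n as [n IH] using lt_wf_ind. destruct n as [|m]. exists []; auto.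
  destruct (IH (snd_ m)) as [L HL]. pose proof (npair_ge (fst_ m) (snd_ m)). rewrite npair_unp in H. lia.
  exists (fst_ m :: L). simpl. rewrite HL, npair_unp. auto. Qed.

Fixpoint form_ind' (P : form -> Prop) (HV : forall n, P (Var n))
  (HA : forall c args, Forall P args -> P (App c args)) (F : form) : P F :=
  match F with
  | Var n => HV n
  | App c args => HA c args ((fix go (l : list form) : Forall P l :=
       match l with [] => Forall_nil P | G :: l' => Forall_cons G (form_ind' P HV HA G) (go l') end) args)
  end.

Lemma wf_App ar c args : wf ar (App c args) <-> c < length ar /\ length args = nth c ar 0 /\ Forall (wf ar) args.
Proof. simpl. assert (E: forall l, (fix wfs (l : list form) : Prop := match l with [] => True | G :: l' => wf ar G /\ wfs l' end) l <-> Forall (wf ar) l).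
  { induction l; simpl. split; auto. rewrite IHl. split. intros [? ?]; constructor; auto. intros H; inversion H; auto. }
  rewrite E. tauto. Qed.

Lemma code_list_inj L1 L2 : code_list L1 = code_list L2 -> L1 = L2.
Proof. revert L2; induction L1; destruct L2; simpl; intros H; try lia; auto.
  injection H as H. apply npair_inj in H as [-> H]. f_equal; auto. Qed.

Lemma code_form_inj F G : code_form F = code_form G -> F = G.
Proof. revert G. induction F as [n|c args IH] using form_ind'; intros [m|c' args'] H; simpl in H;
  apply npair_inj in H as [H1 H2]; try lia; subst; auto.
  apply code_list_inj in H2. injection H1 as ->. f_equal.
  revert args' H2. induction IH as [|a args Ha _ IH']; intros [|a' args'] H2; simpl in H2; try discriminate; auto.
  injection H2 as H2 H3. f_equal; auto. Qed.

Fixpoint scode (sg : nat -> nat) (F : form) : nat :=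
  match F with Var n => sg n | App c args => npair (S c) (code_list (map (scode sg) args)) end.

Lemma code_subst s F : code_form (subst s F) = scode (fun n => code_form (s n)) F.
Proof. induction F as [n|c args IH] using form_ind'; simpl; auto. f_equal. f_equal.
  rewrite map_map. induction IH; simpl; auto. rewrite H, IHIH. auto. Qed.

Fixpoint vbound (F : form) : nat :=
  match F with Var n => S n | App _ args => list_max (map vbound args) end.

Lemma scode_ext sg sg' F : (forall n, n < vbound F -> sg n = sg' n) -> scode sg F = scode sg' F.
Proof. induction F as [n|c args IH] using form_ind'; simpl; intros H; auto.
  f_equal. f_equal. induction IH as [|a args Ha _ IH']; simpl in *; auto.
  f_equal. apply Ha. intros n Hn. apply H. lia. apply IH'. intros n Hn. apply H. lia. Qed.

Lemma rec_scode F : rec (fun t => scode (fun n => lnth t n) F).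
Proof. induction F as [n|c args IH] using form_ind'; simpl. rtac.
  assert (rec (fun t => code_list (map (scode (fun n => lnth t n)) args))).
  { induction IH as [|a args Ha _ IH']; simpl. rtac.
    apply (rec_comp S _ rec_S). apply (rec_npair _ _ Ha IH'). }
  apply rec_npair. rtac. auto. Qed.

Fixpoint subs (F : form) : list form :=
  match F with Var n => [Var n] | App c args => App c args :: concat (map subs args) end.
Lemma subs_self F : In F (subs F). Proof. destruct F; simpl; auto. Qed.
Lemma subs_trans F G H : In G (subs F) -> In H (subs G) -> In H (subs F).
Proof. revert G H. induction F as [n|c args IH] using form_ind'; simpl; intros G H H1 H2.
  - destruct H1 as [<-|[]]. auto.
  - destruct H1 as [<-|H1]. auto. right. apply in_concat in H1 as [l [Hl H1]]. apply in_map_iff in Hl as [a [<- Ha]].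
    apply in_concat. exists (subs a). split. apply in_map; auto. rewrite Forall_forall in IH. eapply IH; eauto. Qed.
Lemma subs_arg c args a F : In (App c args) (subs F) -> In a args -> In a (subs F).
Proof. intros H1 H2. eapply subs_trans. apply H1. simpl. right. apply in_concat. exists (subs a). split.
  apply in_map; auto. apply subs_self. Qed.
Lemma subs_wf ar F G : wf ar F -> In G (subs F) -> wf ar G.
Proof. revert G. induction F as [n|c args IH] using form_ind'; simpl; intros G W H.
  - destruct H as [<-|[]]. auto.
  - destruct H as [<-|H]. auto. apply wf_App in W as (_&_&W).
    apply in_concat in H as [l [Hl H]]. apply in_map_iff in Hl as [a [<- Ha]].
    rewrite Forall_forall in IH, W. eapply IH; eauto. Qed.

Lemma In_code_lt e L : In e L -> e < code_list L.
Proof. induction L; simpl; intros H; [contradiction|destruct H as [<-|H]]. pose proof (npair_ge a (code_list L)); lia.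
  pose proof (npair_ge a (code_list L)). specialize (IHL H). lia. Qed.

Fixpoint dl (fuel l : nat) : list nat :=
  match fuel with 0 => [] | S f => match l with 0 => [] | S m => fst_ m :: dl f (snd_ m) end end.
Definition dlist l := dl l l.
Lemma dl_spec L f : code_list L <= f -> dl f (code_list L) = L.
Proof. revert f; induction L; intros [|f] H; simpl in *; auto; try lia.
  autorewrite with np. f_equal. apply IHL. pose proof (npair_ge a (code_list L)). lia. Qed.
Lemma dlist_spec L : dlist (code_list L) = L.
Proof. apply dl_spec. auto. Qed.

Lemma mul_nz a b : a * b <> 0 <-> a <> 0 /\ b <> 0.
Proof. rewrite Nat.mul_eq_0. tauto. Qed.
Lemma ltn_nz a b : ltn a b <> 0 <-> a < b.
Proof. unfold ltn. destruct (Nat.ltb_spec a b); split; intros; lia. Qed.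
Lemma eqn_nz a b : eqn a b <> 0 <-> a = b.
Proof. unfold eqn. destruct (Nat.eqb_spec a b); split; intros; lia. Qed.
Lemma tst_nz a : tst a <> 0 <-> a <> 0.
Proof. unfold tst, ite. destruct a; split; intros; lia. Qed.
Lemma ite_nz0 a b c : ite (S a) b c = b. Proof. reflexivity. Qed.
Lemma ite_0 b c : ite 0 b c = c. Proof. reflexivity. Qed.
#[export] Hint Rewrite mul_nz ltn_nz eqn_nz tst_nz : nz.

Section Calc.
Variable ar : language.
Variable C : calculus.

Definition wfapp K c l := ltn c (length ar) * eqn (llen l) (lnth (code_list ar) c) * tst (lall (fun y => lmem (fst_ y) (snd_ y)) K l).
Definition wfloc K k := ite (fst_ k) (wfapp K (pred (fst_ k)) (snd_ k)) 1.
Definition certok K := lall (fun y => wfloc (fst_ y) (snd_ y)) K K.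
Lemma rec3_wfapp : rec3 wfapp. Proof. unfold rec3, wfapp. rtac. Qed.
Hint Resolve rec3_wfapp : recdb.
Lemma rec2_wfloc : rec2 wfloc. Proof. unfold rec2, wfloc. rtac. Qed.
Hint Resolve rec2_wfloc : recdb.
Lemma rec_certok : rec certok. Proof. unfold certok. rtac. Qed.
Hint Resolve rec_certok : recdb.

Lemma collect (P : nat -> form -> Prop) Ls : Forall (fun e => exists G, P e G) Ls -> exists Gs, Forall2 P Ls Gs.
Proof. induction 1. exists []; constructor. destruct H as [G HG]. destruct IHForall as [Gs HGs]. exists (G :: Gs). constructor; auto. Qed.

Lemma certok_sound KL : certok (code_list KL) <> 0 -> forall k, In k KL -> exists G, wf ar G /\ code_form G = k.
Proof. unfold certok. rewrite lall_spec, Forall_forall. intros H k.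
  induction k as [k IH] using lt_wf_ind. intros Hk. specialize (H k Hk). autorewrite with np in H.
  unfold wfloc in H. pose proof (npair_unp k) as Ek. destruct (fst_ k) as [|c] eqn:Ef.
  - exists (Var (snd_ k)). split. exact I. simpl. rewrite <- Ek at 2. auto.
  - simpl in H. unfold wfapp in H. autorewrite with nz in H. destruct H as [[H1 H2] H3].
    destruct (code_list_surj (snd_ k)) as [Ls EL]. rewrite <- EL in *.
    rewrite lall_spec, Forall_forall in H3. 
    assert (HF: Forall (fun e => exists G, wf ar G /\ code_form G = e) Ls).
    { rewrite Forall_forall. intros e He. apply IH. pose proof (In_code_lt _ _ He). pose proof (npair_ge (S c) (code_list Ls)). lia.
      specialize (H3 e He). autorewrite with np in H3. apply lmem_spec in H3. auto. }
    apply collect in HF as [Gs HGs].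
    exists (App c Gs). rewrite llen_spec, lnth_spec in H2. split.
    + apply wf_App. split; auto. split. rewrite <- H2. symmetry. apply (Forall2_length HGs).
      clear -HGs. induction HGs; constructor; tauto.
    + simpl. rewrite <- Ek. f_equal. f_equal. clear -HGs. induction HGs; simpl; auto. destruct H as [_ ->]. congruence.
Qed.

Definition goodK (KL : list nat) := forall k, In k KL -> exists G, wf ar G /\ code_form G = k /\
   forall c args, G = App c args -> forall a, In a args -> In (code_form a) KL.

Lemma certok_complete KL : goodK KL -> certok (code_list KL) <> 0.
Proof. intros H. unfold certok. rewrite lall_spec, Forall_forall. intros k Hk. autorewrite with np.
  destruct (H k Hk) as [G [W [<- HG]]]. unfold wfloc. destruct G as [n|c args]; simpl; autorewrite with np. simpl. lia.
  simpl. unfold wfapp. apply wf_App in W as (W1&W2&W3). autorewrite with nz. rewrite llen_spec, lnth_spec, lall_spec, Forall_forall, length_map.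
  split; [split; auto|]. intros e He. autorewrite with np. apply lmem_spec. apply in_map_iff in He as [a [<- Ha]]. eapply HG; eauto.
Qed.

Lemma goodK_app K1 K2 : goodK K1 -> goodK K2 -> goodK (K1 ++ K2).
Proof. intros H1 H2 k Hk. apply in_app_or in Hk as [Hk|Hk].
  - destruct (H1 k Hk) as [G [? [? HG]]]. exists G. repeat split; auto. intros. apply in_or_app. left. eapply HG; eauto.
  - destruct (H2 k Hk) as [G [? [? HG]]]. exists G. repeat split; auto. intros. apply in_or_app. right. eapply HG; eauto.
Qed.
Lemma goodK_subs F : wf ar F -> goodK (map code_form (subs F)).
Proof. intros W k Hk. apply in_map_iff in Hk as [G [<- HG]]. exists G. split. eapply subs_wf; eauto. split; auto.
  intros c args -> a Ha. apply in_map. eapply subs_arg; eauto. Qed.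
Lemma goodK_nil : goodK []. Proof. intros k []. Qed.


Fixpoint finst (As : list form) (idx t : nat) : nat :=
  match As with [] => 0 | A :: As' => ite idx (finst As' (pred idx) t) (scode (fun n => lnth t n) A) end.
Lemma rec2_finst As : rec2 (finst As).
Proof. unfold rec2. induction As as [|A As IH]; simpl. rtac.
  pose (h := fun y => finst As (fst_ y) (snd_ y)). pose proof (rec_scode A) as HA.
  pose (sc := fun t => scode (fun n => lnth t n) A). assert (rec sc) by exact HA.
  apply rec_ext with (g := fun x => ite (fst_ x) (h (npair (pred (fst_ x)) (snd_ x))) (sc (snd_ x))).
  intros x. unfold h, sc. autorewrite with np. auto. rtac. Qed.
Hint Resolve rec2_finst : recdb.
Lemma finst_spec As idx t : idx < length As -> finst As idx t = scode (fun n => lnth t n) (nth idx As (Var 0)).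
Proof. revert idx; induction As; simpl; intros idx H. lia. destruct idx; simpl. auto. apply IHAs. lia. Qed.

Fixpoint allin (Ps : list form) t prev := match Ps with [] => 1 | P :: Ps' => tst (lmem prev (scode (fun n => lnth t n) P)) * allin Ps' t prev end.
Lemma rec2_allin Ps : rec2 (allin Ps).
Proof. unfold rec2. induction Ps as [|P Ps IH]; simpl. rtac.
  pose (h := fun y => allin Ps (fst_ y) (snd_ y)).
  pose (sc := fun t => scode (fun n => lnth t n) P). assert (rec sc) by exact (rec_scode P).
  apply rec_ext with (g := fun x => tst (lmem (snd_ x) (sc (fst_ x))) * h x).
  intros x. unfold h, sc. auto. rtac. Qed.
Hint Resolve rec2_allin : recdb.
Lemma allin_spec Ps t L : allin Ps t (code_list L) <> 0 <-> forall P, In P Ps -> In (scode (fun n => lnth t n) P) L.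
Proof. induction Ps; simpl. split; intros; try lia; contradiction.
  autorewrite with nz. rewrite lmem_spec, IHPs. split. intros [H1 H2] P [<-|HP]; auto. intros H; split; auto. Qed.

Fixpoint fprem (Rs : list (list form * form)) idx t prev := match Rs with [] => 0 | r :: Rs' => ite idx (fprem Rs' (pred idx) t prev) (allin (fst r) t prev) end.
Lemma rec3_fprem Rs : rec3 (fprem Rs).
Proof. unfold rec3. induction Rs as [|r Rs IH]; simpl. rtac.
  pose (h := fun y => fprem Rs (fst_ y) (fst_ (snd_ y)) (snd_ (snd_ y))).
  apply rec_ext with (g := fun x => ite (fst_ x) (h (npair (pred (fst_ x)) (snd_ x))) (allin (fst r) (fst_ (snd_ x)) (snd_ (snd_ x)))).
  intros x. unfold h. autorewrite with np. auto. assert (rec h) by exact IH. rtac. Qed.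
Hint Resolve rec3_fprem : recdb.
Lemma fprem_spec Rs idx t prev : idx < length Rs -> fprem Rs idx t prev = allin (fst (nth idx Rs ([], Var 0))) t prev.
Proof. revert idx; induction Rs; simpl; intros idx H. lia. destruct idx; simpl. auto. apply IHRs. lia. Qed.

Definition vstep K prev st :=
  tst (lall (fun y => lmem (fst_ y) (snd_ y)) K (snd_ (snd_ st))) * ltn (fst_ st) 2 *
  ite (fst_ st) (ltn (fst_ (snd_ st)) (length (rules C)) * fprem (rules C) (fst_ (snd_ st)) (snd_ (snd_ st)) prev)
                (ltn (fst_ (snd_ st)) (length (axioms C))).
Definition inst st := ite (fst_ st) (finst (map snd (rules C)) (fst_ (snd_ st)) (snd_ (snd_ st))) (finst (axioms C) (fst_ (snd_ st)) (snd_ (snd_ st))).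
Lemma rec3_vstep : rec3 vstep. Proof. unfold rec3, vstep. rtac. Qed.
Lemma rec_inst : rec inst. Proof. unfold inst. rtac. Qed.
Hint Resolve rec3_vstep rec_inst : recdb.

Definition dfstep s := npair (fst_ (fst_ s)) (npair (S (npair (inst (snd_ s)) (fst_ (snd_ (fst_ s))))) (snd_ (snd_ (fst_ s)) * vstep (fst_ (fst_ s)) (fst_ (snd_ (fst_ s))) (snd_ s))).
Lemma rec_dfstep : rec dfstep. Proof. unfold dfstep. rtac. Qed.
Hint Resolve rec_dfstep : recdb.
Definition dres w := lfold dfstep (npair (fst_ w) (npair 0 1)) (snd_ w).
Definition chkD x := tst (certok (fst_ (fst_ x))) * snd_ (snd_ (dres (fst_ x))) * tst (lmem (fst_ (snd_ (dres (fst_ x)))) (snd_ x)).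
Lemma rec_dres : rec dres. Proof. unfold dres. rtac. Qed.
Hint Resolve rec_dres : recdb.
Lemma rec_chkD : rec chkD. Proof. unfold chkD. rtac. Qed.


Lemma choice_nat (P : nat -> form -> Prop) : (forall n, exists G, P n G) -> exists s, forall n, P n (s n).
Proof. intros H. exists (fun n => proj1_sig (constructive_indefinite_description _ (H n))).
  intros n. exact (proj2_sig (constructive_indefinite_description _ (H n))). Qed.

Lemma derivation_app d0 G : derivation ar C d0 -> deriv_step ar C d0 G -> derivation ar C (d0 ++ [G]).
Proof. intros H1 H2 i Hi. rewrite length_app in Hi; simpl in Hi.
  destruct (Nat.eq_dec i (length d0)) as [->|Hne].
  - rewrite firstn_app, firstn_all, Nat.sub_diag; simpl; rewrite app_nil_r. rewrite app_nth2, Nat.sub_diag by lia. exact H2.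
  - rewrite firstn_app. replace (i - length d0) with 0 by lia. simpl. rewrite app_nil_r. rewrite app_nth1 by lia. apply H1. lia.
Qed.
Lemma derivation_app_inv d0 G : derivation ar C (d0 ++ [G]) -> derivation ar C d0 /\ deriv_step ar C d0 G.
Proof. intros H. split.
  - intros i Hi. assert (Hi' : i < length (d0 ++ [G])) by (rewrite length_app; simpl; lia).
    specialize (H i Hi'). rewrite firstn_app, app_nth1 in H by lia. replace (i - length d0) with 0 in H by lia.
    simpl in H. rewrite app_nil_r in H. auto.
  - assert (Hi' : length d0 < length (d0 ++ [G])) by (rewrite length_app; simpl; lia).
    specialize (H _ Hi'). rewrite firstn_app, firstn_all, Nat.sub_diag, app_nth2, Nat.sub_diag in H by lia.
    simpl in H. rewrite app_nil_r in H. auto.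
Qed.

Lemma scode_ptw sg sg' F : (forall n, sg n = sg' n) -> scode sg F = scode sg' F.
Proof. intros H. apply scode_ext. auto. Qed.

Lemma step_sound KL prevL d0 st :
  (forall k, In k KL -> exists G, wf ar G /\ code_form G = k) ->
  (forall k, In k prevL -> exists G, In G d0 /\ code_form G = k) ->
  vstep (code_list KL) (code_list prevL) st <> 0 ->
  exists G, code_form G = inst st /\ deriv_step ar C d0 G.
Proof.
  intros HK HP H. unfold vstep, inst in *. autorewrite with nz in H. destruct H as [[Hall Hk] Hite].
  destruct (code_list_surj (snd_ (snd_ st))) as [TL ET]. rewrite <- ET in *.
  rewrite lall_spec, Forall_forall in Hall.
  assert (Hs: forall n, exists G, wf ar G /\ code_form G = lnth (code_list TL) n).
  { intros n. rewrite lnth_spec. destruct (Nat.lt_ge_cases n (length TL)) as [Hn|Hn].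
    - apply HK. specialize (Hall _ (nth_In TL 0 Hn)). autorewrite with np in Hall. apply lmem_spec in Hall. auto.
    - rewrite nth_overflow by auto. exists (Var 0). split. exact I. reflexivity. }
  apply choice_nat in Hs as [s Hs].
  assert (Hsc: forall A, scode (fun n => lnth (code_list TL) n) A = code_form (subst s A)).
  { intros A. rewrite code_subst. apply scode_ptw. intros n. symmetry. apply Hs. }
  assert (Ws: wf_subst ar s) by (intros n; apply Hs).
  destruct (fst_ st) as [|[|kk]]; [| |lia]; simpl in Hite |- *.
  - autorewrite with nz in Hite. rewrite finst_spec by auto. rewrite Hsc.
    eexists. split. reflexivity. left. exists (nth (fst_ (snd_ st)) (axioms C) (Var 0)), s. split; auto. apply nth_In; auto.
  - autorewrite with nz in Hite. destruct Hite as [Hi Hpr]. rewrite finst_spec by (rewrite length_map; auto).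
    rewrite fprem_spec in Hpr by auto. rewrite allin_spec in Hpr.
    set (r := nth (fst_ (snd_ st)) (rules C) ([], Var 0)).
    assert (E: nth (fst_ (snd_ st)) (map snd (rules C)) (Var 0) = snd r) by (unfold r; apply (map_nth snd (rules C) ([], Var 0))).
    rewrite E, Hsc. eexists. split. reflexivity. right. exists r, s. split. apply nth_In; auto. split; auto. split; auto.
    intros A HA. specialize (Hpr A HA). rewrite Hsc in Hpr. destruct (HP _ Hpr) as [G' [HG' EG']].
    apply code_form_inj in EG'. subst. auto.
Qed.

Lemma fold_sound KL DL : (forall k, In k KL -> exists G, wf ar G /\ code_form G = k) ->
  forall prevL ok, (ok <> 0 -> exists d0, derivation ar C d0 /\ forall k, In k prevL <-> exists G, In G d0 /\ code_form G = k) ->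
  exists prevL' ok', fold_left (fun acc e => dfstep (npair acc e)) DL (npair (code_list KL) (npair (code_list prevL) ok)) = npair (code_list KL) (npair (code_list prevL') ok') /\
   (ok' <> 0 -> exists d1, derivation ar C d1 /\ forall k, In k prevL' <-> exists G, In G d1 /\ code_form G = k).
Proof. intros HK. induction DL as [|st DL IH]; intros prevL ok Hok; simpl.
  - exists prevL, ok. auto.
  - destruct (IH (inst st :: prevL) (ok * vstep (code_list KL) (code_list prevL) st)) as [prevL' [ok' [E1 E2]]].
    + intros Hnz. apply mul_nz in Hnz as [Hok' Hv]. destruct (Hok Hok') as [d0 [Hd0 Hm]].
      destruct (step_sound KL prevL d0 st HK (fun k Hk => proj1 (Hm k) Hk) Hv) as [G [EG HG]].
      exists (d0 ++ [G]). split. apply derivation_app; auto.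
      intros k. simpl. rewrite Hm. split.
      * intros [<-|[G' [? ?]]]. exists G. split; auto. apply in_or_app; simpl; auto. exists G'; split; auto. apply in_or_app; auto.
      * intros [G' [HG' ?]]. apply in_app_or in HG' as [?|[<-|[]]]. right. exists G'; auto. left. congruence.
    + exists prevL', ok'. split; auto. rewrite <- E1. f_equal. unfold dfstep. autorewrite with np. reflexivity.
Qed.

Lemma chkD_sound w F : chkD (npair w (code_form F)) <> 0 -> Thm ar C F.
Proof. unfold chkD. autorewrite with np. autorewrite with nz. intros [[Hc Hok] Hm].
  destruct (code_list_surj (fst_ w)) as [KL EK]. destruct (code_list_surj (snd_ w)) as [DL ED].
  unfold dres in *. rewrite <- ED, lfold_spec in *. rewrite <- EK in *.
  pose proof (certok_sound KL Hc) as HK.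
  destruct (fold_sound KL DL HK [] 1) as [prevL' [ok' [E1 E2]]].
  { intros _. exists []. split. intros i Hi; simpl in Hi; lia. intros k; simpl; split; [intros []|intros [G [[] _]]]. }
  simpl in E1. rewrite E1 in *. autorewrite with np in *. destruct (E2 Hok) as [d1 [Hd1 Hm1]].
  apply lmem_spec, Hm1 in Hm. destruct Hm as [G [HG EG]]. apply code_form_inj in EG. subst. exists d1. auto.
Qed.

Lemma nth_map_seq (f : nat -> nat) B n d : n < B -> nth n (map f (seq 0 B)) d = f n.
Proof. intros H. rewrite nth_indep with (d' := f 0) by (rewrite length_map, length_seq; lia).
  rewrite map_nth, seq_nth by lia. auto. Qed.
Definition TLof (s : nat -> form) B := map (fun n => code_form (s n)) (seq 0 B).
Definition KLof (s : nat -> form) B := concat (map (fun n => map code_form (subs (s n))) (seq 0 B)).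
Lemma scode_TL s B A : vbound A <= B -> scode (fun n => lnth (code_list (TLof s B)) n) A = code_form (subst s A).
Proof. intros H. rewrite code_subst. apply scode_ext. intros n Hn. rewrite lnth_spec. unfold TLof.
  apply (nth_map_seq (fun n => code_form (s n))). lia. Qed.
Lemma goodK_concat Ls : Forall goodK Ls -> goodK (concat Ls).
Proof. induction 1; simpl. apply goodK_nil. apply goodK_app; auto. Qed.
Lemma goodK_KLof s B : wf_subst ar s -> goodK (KLof s B).
Proof. intros W. apply goodK_concat. rewrite Forall_forall. intros L HL. apply in_map_iff in HL as [n [<- _]]. apply goodK_subs. apply W. Qed.
Lemma TL_in_KL s B e : In e (TLof s B) -> In e (KLof s B).
Proof. unfold TLof, KLof. intros H. apply in_map_iff in H as [n [<- Hn]]. apply in_concat. eexists. split.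
  apply in_map_iff. exists n. split; eauto. apply in_map. apply subs_self. Qed.

Lemma step_complete d0 G : deriv_step ar C d0 G -> exists st KL0, goodK KL0 /\ inst st = code_form G /\
  forall KL prevL, incl KL0 KL -> (forall G', In G' d0 -> In (code_form G') prevL) -> vstep (code_list KL) (code_list prevL) st <> 0.
Proof.
  intros [[A [s [HA [Ws ->]]]] | [r [s [Hr [Ws [-> Hprem]]]]]].
  - destruct (In_nth _ _ (Var 0) HA) as [idx [Hidx EA]].
    exists (npair 0 (npair idx (code_list (TLof s (vbound A))))), (KLof s (vbound A)). split. apply goodK_KLof; auto.
    unfold inst, vstep. autorewrite with np. simpl. rewrite finst_spec, EA, scode_TL by auto. split. auto.
    intros KL prevL Hinc _. autorewrite with nz. split. split.
    + rewrite lall_spec, Forall_forall. intros e He. autorewrite with np. apply lmem_spec. apply Hinc. apply TL_in_KL. auto.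
    + unfold ltn. simpl. lia.
    + auto.
  - destruct (In_nth _ _ ([], Var 0) Hr) as [idx [Hidx Er]].
    set (B := list_max (map vbound (snd r :: fst r))).
    assert (HB: forall P, In P (snd r :: fst r) -> vbound P <= B).
    { intros P HP. unfold B. pose proof (list_max_le (map vbound (snd r :: fst r)) B) as [H1 _].
      specialize (H1 (le_n _)). rewrite Forall_forall in H1. apply H1. apply in_map. auto. }
    exists (npair 1 (npair idx (code_list (TLof s B)))), (KLof s B). split. apply goodK_KLof; auto.
    unfold inst, vstep. autorewrite with np. simpl. rewrite finst_spec by (rewrite length_map; auto).
    rewrite (map_nth snd (rules C) ([], Var 0)) in *. simpl. rewrite Er. split. apply scode_TL. apply HB. left; auto.
    intros KL prevL Hinc Hd0. autorewrite with nz. split. split.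
    + rewrite lall_spec, Forall_forall. intros e He. autorewrite with np. apply lmem_spec. apply Hinc. apply TL_in_KL. auto.
    + unfold ltn. simpl. lia.
    + split. auto. rewrite fprem_spec, Er by auto. apply allin_spec. intros P HP. rewrite scode_TL. apply Hd0. apply Hprem. auto.
      apply HB. right; auto.
Qed.

Lemma fold_complete d : derivation ar C d -> exists DL KL0, goodK KL0 /\ forall KL, incl KL0 KL -> exists ok',
  fold_left (fun acc e => dfstep (npair acc e)) DL (npair (code_list KL) (npair 0 1)) = npair (code_list KL) (npair (code_list (rev (map code_form d))) ok') /\ ok' <> 0.
Proof. induction d as [|G d0 IH] using rev_ind; intros Hd.
  - exists [], []. split. apply goodK_nil. intros KL _. exists 1. simpl. auto.
  - apply derivation_app_inv in Hd as [Hd0 Hs]. destruct (IH Hd0) as [DL0 [KL1 [G1 H1]]].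
    destruct (step_complete d0 G Hs) as [st [KL2 [G2 [Ei H2]]]].
    exists (DL0 ++ [st]), (KL1 ++ KL2). split. apply goodK_app; auto. intros KL Hinc.
    destruct (H1 KL) as [ok' [E1 E2]]. intros x Hx; apply Hinc, in_or_app; auto.
    exists (ok' * vstep (code_list KL) (code_list (rev (map code_form d0))) st). rewrite fold_left_app, E1. simpl.
    unfold dfstep. autorewrite with np. rewrite Ei, map_app, rev_app_distr. simpl. split. auto.
    apply mul_nz. split. auto. apply H2. intros x Hx; apply Hinc, in_or_app; auto.
    intros G' HG'. apply in_rev. rewrite rev_involutive. apply in_map. auto.
Qed.

Lemma chkD_complete F : Thm ar C F -> exists w, chkD (npair w (code_form F)) <> 0.
Proof. intros [d [Hd HF]]. destruct (fold_complete d Hd) as [DL [KL0 [G0 H0]]].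
  destruct (H0 KL0 (incl_refl _)) as [ok' [E1 E2]].
  exists (npair (code_list KL0) (code_list DL)). unfold chkD, dres. autorewrite with np.
  rewrite lfold_spec, E1. autorewrite with np. autorewrite with nz. split. split. apply certok_complete; auto. auto.
  apply lmem_spec. apply in_rev. rewrite rev_involutive. apply in_map. auto.
Qed.

End Calc.

Lemma rec_guard b f : rec b -> (exists p, forall x, b x <> 0 -> reval p [x] (f x)) -> rec (fun x => ite (b x) (f x) 0).
Proof. intros [pb Hb] [p Hp].
  assert (H: forall k x, (k <> 0 -> b x <> 0) -> reval (RPrec RZero (RComp p [RProj 2])) [k; x] (ite k (f x) 0)).
  { induction k; intros x Hk. constructor. constructor.
    econstructor. apply IHk. intros; apply Hk; lia. eapply ev_comp. econstructor. apply ev_proj'; reflexivity. constructor.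
    apply Hp. apply Hk. lia. }
  exists (RComp (RPrec RZero (RComp p [RProj 2])) [pb; RProj 0]). intros x.
  eapply ev_comp. econstructor. apply Hb. econstructor. apply ev_proj'; reflexivity. constructor. apply H. auto. Qed.

Lemma least (g : nat -> nat) : (exists n, g n = 0) -> exists n, g n = 0 /\ forall m, m < n -> g m <> 0.
Proof. intros [n Hn]. induction n as [n IH] using lt_wf_ind.
  destruct (classic (exists m, m < n /\ g m = 0)) as [[m [Hm1 Hm2]]|H].
  - apply (IH m Hm1 Hm2).
  - exists n. split; auto. intros m Hm E. apply H. eauto. Qed.

Definition b2n (b : bool) := if b then 1 else 0.

Section Logic.
Variable ar : language.
Variable C : calculus.
Variable M : nat -> fvlogic.
Variables pN pD pT : recfun.
Hypothesis HN : forall i, reval pN [i] (nval (M i)).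
Hypothesis HD : forall i v, v < nval (M i) -> reval pD [i; v] (if desig (M i) v then 1 else 0).
Hypothesis HT : forall i c args, c < length ar -> length args = nth c ar 0 ->
        (forall v, In v args -> v < nval (M i)) -> reval pT [i; c; code_list args] (tfun (M i) c args).
Hypothesis Hfv : forall i, is_fvlogic ar (M i).

Definition N j := nval (M j).
Lemma rec_N : rec N. Proof. exists pN. apply HN. Qed.
Hint Resolve rec_N : recdb.

Definition dsg j v := ite (ltn v (N j)) (b2n (desig (M j) v)) 0.
Lemma rec2_dsg : rec2 dsg.
Proof. unfold rec2, dsg. apply (rec_guard (fun x => ltn (snd_ x) (N (fst_ x))) (fun x => b2n (desig (M (fst_ x)) (snd_ x)))).
  rtac. exists (RComp pD [pfst; psnd]). intros x Hx. apply ltn_nz in Hx.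
  eapply ev_comp. econstructor. apply pfst_ok. econstructor. apply psnd_ok. constructor. apply HD. auto. Qed.
Hint Resolve rec2_dsg : recdb.

Definition valid j c l := ltn c (length ar) * eqn (llen l) (lnth (code_list ar) c) * tst (lall (fun y => ltn (snd_ y) (N (fst_ y))) j l).
Definition tf j c l := ite (valid j c l) (tfun (M j) c (dlist l)) 0.
Lemma rec3_tf : rec3 tf.
Proof. unfold rec3, tf.
  apply (rec_guard (fun x => valid (fst_ x) (fst_ (snd_ x)) (snd_ (snd_ x))) (fun x => tfun (M (fst_ x)) (fst_ (snd_ x)) (dlist (snd_ (snd_ x))))).
  unfold valid. rtac.
  exists (RComp pT [pfst; RComp pfst [psnd]; RComp psnd [psnd]]). intros x Hx.
  unfold valid in Hx. autorewrite with nz in Hx. destruct Hx as [[H1 H2] H3].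
  destruct (code_list_surj (snd_ (snd_ x))) as [Ls EL]. rewrite <- EL in *.
  rewrite llen_spec, lnth_spec in H2. rewrite lall_spec, Forall_forall in H3.
  eapply ev_comp. econstructor. apply pfst_ok. econstructor. eapply ev_comp. econstructor. apply psnd_ok. constructor. apply pfst_ok.
  econstructor. eapply ev_comp. econstructor. apply psnd_ok. constructor. apply psnd_ok. constructor.
  rewrite <- EL. rewrite dlist_spec. apply HT; auto. intros v Hv. specialize (H3 v Hv). autorewrite with np nz in H3. auto.
Qed.
Hint Resolve rec3_tf : recdb.

Definition appok w e := ltn (pred (fst_ (fst_ e))) (length ar) * eqn (llen (snd_ (fst_ e))) (lnth (code_list ar) (pred (fst_ (fst_ e)))) *
  tst (lall (fun y => lex (fun z => eqn (fst_ (snd_ z)) (fst_ z)) (snd_ y) (snd_ (fst_ y))) w (snd_ (fst_ e))) *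
  eqn (snd_ e) (tf (fst_ w) (pred (fst_ (fst_ e))) (lmap (fun y => look (fst_ y) (snd_ y)) (snd_ w) (snd_ (fst_ e)))).
Definition entok w e := ltn (snd_ e) (N (fst_ w)) * eqn (look (snd_ w) (fst_ e)) (snd_ e) * ite (fst_ (fst_ e)) (appok w e) 1.
Definition chkR x := tst (lall (fun y => entok (fst_ y) (snd_ y)) (fst_ x) (snd_ (fst_ x))) *
  tst (lex (fun y => eqn (fst_ (snd_ y)) (fst_ y)) (snd_ x) (snd_ (fst_ x))) * (1 - tst (dsg (fst_ (fst_ x)) (look (snd_ (fst_ x)) (snd_ x)))).
Lemma rec2_appok : rec2 appok. Proof. unfold rec2, appok. rtac. Qed.
Hint Resolve rec2_appok : recdb.
Lemma rec2_entok : rec2 entok. Proof. unfold rec2, entok. rtac. Qed.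
Hint Resolve rec2_entok : recdb.
Lemma rec_chkR : rec chkR. Proof. unfold chkR. rtac. Qed.
Hint Resolve rec_chkR : recdb.


Lemma lookf_some a L v : lookf a L = Some v -> exists e, In e L /\ fst_ e = a /\ snd_ e = v.
Proof. induction L as [|e L IH]; simpl. discriminate. destruct (Nat.eqb_spec (fst_ e) a).
  intros [= <-]. eauto. intros H. destruct (IH H) as [e' [? ?]]. eauto. Qed.
Lemma lookf_ex a L : (exists e, In e L /\ fst_ e = a) -> exists v, lookf a L = Some v.
Proof. induction L as [|e L IH]; simpl. intros [e [[] _]]. destruct (Nat.eqb_spec (fst_ e) a). eauto.
  intros [e' [[<-|H1] H2]]. congruence. eauto. Qed.
Lemma has_entry a L : lex (fun y => eqn (fst_ (snd_ y)) (fst_ y)) a (code_list L) <> 0 <-> exists e, In e L /\ fst_ e = a.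
Proof. rewrite lex_spec, Exists_exists. split; intros [e [H1 H2]]; exists e; split; auto;
  autorewrite with np nz in *; auto. Qed.

Lemma chkR_sound w F : wf ar F -> chkR (npair w (code_form F)) <> 0 -> ~ Taut ar (M (fst_ w)) F.
Proof.
  intros WF H. unfold chkR in H. autorewrite with np nz in H. destruct H as [[Hall HF] Hd].
  set (j := fst_ w) in *. destruct (code_list_surj (snd_ w)) as [TL ET].
  assert (Ew: w = npair j (code_list TL)) by (rewrite ET; unfold j; symmetry; apply npair_unp).
  rewrite <- ET in *. rewrite lall_spec, Forall_forall in Hall. apply has_entry in HF.
  assert (HE: forall e, In e TL -> entok w e <> 0). { intros e He. specialize (Hall e He). autorewrite with np in Hall. auto. }
  assert (Hlt: forall a, (exists e, In e TL /\ fst_ e = a) -> look (code_list TL) a < N j).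
  { intros a Ha. destruct (lookf_ex _ _ Ha) as [v Hv]. rewrite look_spec, Hv. destruct (lookf_some _ _ _ Hv) as [e [He [_ <-]]].
    specialize (HE e He). unfold entok in HE. autorewrite with nz in HE. tauto. }
  set (val := fun n => look (code_list TL) (npair 0 n)).
  assert (Hval: valuation (M j) val).
  { intros n. unfold val. destruct (classic (exists e, In e TL /\ fst_ e = npair 0 n)) as [Hx|Hx]. apply Hlt; auto.
    rewrite look_spec. destruct (lookf (npair 0 n) TL) eqn:El. exfalso. apply Hx. destruct (lookf_some _ _ _ El) as [e [? [? _]]]. eauto.
    pose proof (Hlt _ HF). unfold N in *. lia. }
  assert (Key: forall G, wf ar G -> (exists e, In e TL /\ fst_ e = code_form G) -> value (M j) val G = look (code_list TL) (code_form G)).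
  { induction G as [n|c args IH] using form_ind'; intros WG HG. reflexivity.
    destruct HG as [e [He Ee]]. pose proof (HE e He) as Hok. unfold entok in Hok. rewrite <- ET in Hok. rewrite Ee in Hok. simpl code_form in Hok.
    autorewrite with np in Hok. simpl in Hok. autorewrite with nz in Hok. destruct Hok as [[Hv Hl] Ha].
    unfold appok in Ha. rewrite Ee in Ha. simpl code_form in Ha. autorewrite with np in Ha. simpl in Ha.
    autorewrite with nz in Ha. destruct Ha as [[[Hc Hlen] Hargs] Hv'].
    rewrite Ew in Hargs, Hv'. autorewrite with np in Hargs, Hv'.
    rewrite lall_spec, Forall_forall in Hargs.
    assert (Hargs': forall a, In a args -> exists e, In e TL /\ fst_ e = code_form a).
    { intros a Ha. specialize (Hargs (code_form a) (in_map _ _ _ Ha)). autorewrite with np in Hargs. apply has_entry in Hargs. auto. }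
    apply wf_App in WG as (W1&W2&W3). rewrite Forall_forall in IH, W3.
    assert (Emap: map (value (M j) val) args = map (fun a => look (code_list TL) (code_form a)) args).
    { apply map_ext_in. intros a Ha. apply IH; auto. }
    rewrite lmap_spec in Hv'. rewrite map_map in Hv'.
    assert (Hv'': snd_ e = tf j c (code_list (map (fun a => look (code_list TL) (code_form a)) args))).
    { rewrite Hv'. f_equal. f_equal. apply map_ext. intros a. autorewrite with np. auto. }
    simpl. rewrite Emap. simpl code_form. rewrite Hl, Hv''. unfold tf.
    rewrite dlist_spec.
    assert (Hvalid: valid j c (code_list (map (fun a => look (code_list TL) (code_form a)) args)) <> 0).
    { unfold valid. autorewrite with nz. rewrite llen_spec, lnth_spec, lall_spec, Forall_forall, !length_map.
      split. split; auto. intros v Hv0. autorewrite with np nz. apply in_map_iff in Hv0 as [a [<- Ha]]. apply Hlt. auto. }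
    destruct (valid j c _); [lia|]. reflexivity. }
  intros [_ HT']. specialize (HT' val Hval). unfold satisfies in HT'. rewrite Key in HT' by auto.
  pose proof (Hlt _ HF). unfold dsg in Hd. apply ltn_nz in H. destruct (ltn _ _) as [|?]; [lia|]. simpl in Hd.
  rewrite HT' in Hd. unfold b2n, tst, ite in Hd. lia.
Qed.


Lemma value_lt j val G : valuation (M j) val -> wf ar G -> value (M j) val G < nval (M j).
Proof. intros Hv. induction G as [n|c args IH] using form_ind'; intros W. apply Hv.
  apply wf_App in W as (W1&W2&W3). simpl. apply Hfv; auto. rewrite length_map; auto.
  intros v Hin. apply in_map_iff in Hin as [a [<- Ha]]. rewrite Forall_forall in IH, W3. auto. Qed.

Lemma lookf_map j val G L : In G L -> lookf (code_form G) (map (fun G => npair (code_form G) (value (M j) val G)) L) = Some (value (M j) val G).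
Proof. induction L as [|G0 L IH]; simpl. intros []. intros H. autorewrite with np.
  destruct (Nat.eqb_spec (code_form G0) (code_form G)) as [E|E]. apply code_form_inj in E. subst. auto.
  destruct H as [<-|H]. congruence. auto. Qed.

Lemma chkR_complete j val F : wf ar F -> valuation (M j) val -> ~ satisfies (M j) val F ->
  exists w, chkR (npair w (code_form F)) <> 0.
Proof.
  intros WF Hv Hns. set (h := fun G => npair (code_form G) (value (M j) val G)).
  set (TL := map h (subs F)). exists (npair j (code_list TL)).
  assert (Hlk: forall G, In G (subs F) -> look (code_list TL) (code_form G) = value (M j) val G).
  { intros G HG. rewrite look_spec. unfold TL, h. rewrite lookf_map; auto. }
  unfold chkR. autorewrite with np nz. split. split.
  - rewrite lall_spec, Forall_forall. intros e He. autorewrite with np. unfold TL in He. apply in_map_iff in He as [G [<- HG]].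
    pose proof (subs_wf _ _ _ WF HG) as WG.
    unfold entok, h. autorewrite with np nz. split. split.
    + apply value_lt; auto.
    + apply Hlk; auto.
    + destruct G as [n|c args]; simpl code_form; autorewrite with np; simpl. lia.
      unfold appok. autorewrite with np. simpl. apply wf_App in WG as (W1&W2&W3). rewrite Forall_forall in W3.
      autorewrite with nz. rewrite llen_spec, lnth_spec, lall_spec, Forall_forall, length_map, lmap_spec, map_map.
      split. split. split; auto.
      * intros x Hx. autorewrite with np. apply has_entry. apply in_map_iff in Hx as [a [<- Ha]].
        exists (h a). split. unfold TL. apply in_map. eapply subs_arg; eauto. unfold h. autorewrite with np. auto.
      * unfold tf. replace (map (fun x => look (fst_ (npair (code_list TL) (code_form x))) (snd_ (npair (code_list TL) (code_form x)))) args)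
          with (map (value (M j) val) args).
        2:{ apply map_ext_in. intros a Ha. autorewrite with np. symmetry. apply Hlk. eapply subs_arg; eauto. }
        rewrite dlist_spec.
        assert (Hvalid: valid j c (code_list (map (value (M j) val) args)) <> 0).
        { unfold valid. autorewrite with nz. rewrite llen_spec, lnth_spec, lall_spec, Forall_forall, length_map.
          split. split; auto. intros v Hv0. autorewrite with np nz. apply in_map_iff in Hv0 as [a [<- Ha]]. apply value_lt; auto. }
        destruct (valid j c _); [lia|]. reflexivity.
  - apply has_entry. exists (h F). split. unfold TL. apply in_map. apply subs_self. unfold h. autorewrite with np. auto.
  - rewrite Hlk by apply subs_self. unfold dsg. assert (Hl: value (M j) val F < N j) by (apply value_lt; auto).
    apply ltn_nz in Hl. destruct (ltn _ _); [lia|]. simpl. unfold satisfies in Hns.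
    destruct (desig (M j) (value (M j) val F)); [tauto|]. simpl. lia.
Qed.


Hypothesis Hiff : forall F, wf ar F -> (Thm ar C F <-> forall j, Taut ar (M j) F).

Definition chk x := ite (fst_ (fst_ x)) (ite (pred (fst_ (fst_ x))) 0 (chkR (npair (snd_ (fst_ x)) (snd_ x)))) (chkD ar C (npair (snd_ (fst_ x)) (snd_ x))).
Lemma rec_chk : rec (fun x => 1 - tst (chk x)).
Proof. pose proof (rec_chkD ar C). unfold chk. rtac. Qed.

Lemma rec_out : rec (fun n => ite (fst_ n) 0 1). Proof. rtac. Qed.

Lemma decidable_Thm : decidable_set ar (Thm ar C).
Proof.
  destruct rec_chk as [pc Hpc]. destruct rec_out as [po Hpo].
  exists (RComp po [RMu (RComp pc [pnpair])]). intros F WF.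
  set (g := fun n => 1 - tst (chk (npair n (code_form F)))).
  assert (Hg: forall m, reval (RComp pc [pnpair]) [m; code_form F] (g m)).
  { intros m. eapply ev_comp. econstructor. apply pnpair_ok. constructor. apply Hpc. }
  assert (Hex: exists n, g n = 0).
  { destruct (classic (Thm ar C F)) as [HT'|HT'].
    - destruct (chkD_complete ar C F HT') as [w Hw]. exists (npair 0 w). unfold g, chk. autorewrite with np. simpl.
      unfold tst, ite. destruct (chkD ar C _); lia.
    - rewrite (Hiff F WF) in HT'. apply not_all_ex_not in HT' as [j Hj].
      assert (exists val, valuation (M j) val /\ ~ satisfies (M j) val F) as [val [Hv Hs]].
      { apply NNPP. intros Hn. apply Hj. split; auto. intros val Hv. apply NNPP. intros Hs. apply Hn. eauto. }
      destruct (chkR_complete j val F WF Hv Hs) as [w Hw]. exists (npair 1 w). unfold g, chk. autorewrite with np. simpl.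
      unfold tst, ite. destruct (chkR _); lia. }
  apply least in Hex as [n [Hn Hmin]].
  exists (fst_ n =? 0). split.
  - apply ev_comp with (ys := [n]). constructor. apply ev_mu. pose proof (Hg n) as H0. rewrite Hn in H0. exact H0.
    + intros m Hm. exists (pred (g m)). specialize (Hmin m Hm). replace (S (pred (g m))) with (g m) by lia. apply Hg.
    + constructor.
    + replace (if fst_ n =? 0 then 1 else 0) with (ite (fst_ n) 0 1). apply Hpo. destruct (fst_ n); auto.
  - unfold g, chk in Hn. autorewrite with np in Hn. assert (Hc: forall a, 1 - tst a = 0 -> a <> 0) by (intros a; unfold tst, ite; destruct a; lia).
    apply Hc in Hn. destruct (fst_ n) as [|[|k]]; simpl in Hn |- *.
    + split; auto. intros _. apply (chkD_sound ar C _ _ Hn).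
    + split. discriminate. intros HT'. exfalso. apply (chkR_sound _ _ WF Hn). apply (Hiff F WF). auto.
    + lia.
Qed.

End Logic.

Theorem corollary3 (ar : language) (C : calculus) :
  wf_calculus ar C ->
  ~ decidable_set ar (Thm ar C) ->
  ~ effectively_approximable ar C.
Proof.
  intros _ Hnd [M [Hfv [[pN [pD [pT [HN [HD HT]]]]] [_ [_ Hiff]]]]].
  apply Hnd. eapply decidable_Thm; eauto.
Qed.
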